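(* Let $\nu<0$. As a function of $\lambda\in(\nu^2,+\infty)$, $\theta_{\lambda,\nu}$ is strictly increasing, with $\lim_{\lambda\to(\nu^2)^+}\theta_{\lambda,\nu}=-\infty$ and $\lim_{\lambda\to+\infty}\theta_{\lambda,\nu}=+\infty$. Moreover, for every $\lambda>\nu^2$, $\frac{1}{2\pi}\Big(\ln(\sqrt\lambda+\nu)-\frac{2\sqrt\lambda}{\sqrt\lambda+\nu}+2\gamma\Big)\le\theta_{\lambda,\nu}\le\frac{1}{2\pi}\Big(\ln(\sqrt\lambda+\nu)-\frac{\sqrt\lambda}{\sqrt\lambda+\nu}+2\gamma\Big)$.
   Context: $\theta_{\lambda,\nu}=\frac{1}{2\pi}\big(\psi(\frac12+\frac{\nu}{2\sqrt\lambda})+2\gamma+\ln(2\sqrt\lambda)\big)$, where $\psi=\Gamma'/\Gamma$ is the digamma function and $\gamma$ the Euler–Mascheroni constant. *)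

(* Defs.v *)
From Stdlib Require Import Reals.
From Coquelicot Require Import Coquelicot.
Open Scope R_scope.

Definition Gamma (x : R) : R :=
  RInt_gen (fun t => Rpower t (x - 1) * exp (- t)) (at_right 0) (Rbar_locally p_infty).

Definition digamma (x : R) : R := Derive Gamma x / Gamma x.

(* Euler–Mascheroni constant: lim_n (H_n - ln n), here indexed as
   H_{n+1} - ln (n+1) = sum_{k=0}^{n} 1/(k+1) - ln (n+1). *)
Definition euler_gamma : R :=
  real (Lim_seq (fun n => sum_f_R0 (fun k => / INR (k + 1)) n - ln (INR (n + 1)))).

Definition theta (lam nu : R) : R :=
  / (2 * PI) * (digamma (/ 2 + nu / (2 * sqrt lam)) + 2 * euler_gamma
                + ln (2 * sqrt lam)).

(* Main.v *)
Require Import Defs.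
From Stdlib Require Import Reals Lra FunctionalExtensionality.
From Coquelicot Require Import Coquelicot.
Open Scope R_scope.

Lemma ln_le_sub1 u : 0 < u -> ln u <= u - 1.
Proof. intros Hu. pose proof (exp_ineq1_le (ln u)). rewrite exp_ln in H; lra. Qed.

Lemma exp_le_inc x y : x <= y -> exp x <= exp y.
Proof. intros [H|H]. left; apply exp_increasing; auto. subst; lra. Qed.

Lemma exp_ge_id v : v < exp v.
Proof. pose proof (exp_ineq1_le v). lra. Qed.

Lemma ln2_lt : ln 2 < 37/50.
Proof.
  assert (H : 2 < exp (37/50)).
  { replace (37/50) with (8 * (37/400)) by field.
    assert (E : forall n a, exp (INR n * a) = (exp a) ^ n).
    { induction n; intros a. simpl. rewrite Rmult_0_l, exp_0. reflexivity.
      rewrite S_INR, Rmult_plus_distr_r, Rmult_1_l, exp_plus, IHn. simpl. ring. }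
    replace 8 with (INR 8) by (simpl; ring). rewrite E.
    pose proof (exp_ineq1_le (37/400)).
    apply Rlt_le_trans with ((1 + 37/400)^8).
    simpl. lra.
    apply pow_incr. lra. }
  rewrite <- (ln_exp (37/50)). apply ln_increasing; lra.
Qed.

Lemma expm1_bound u : Rabs (exp u - 1 - u) <= u^2 * exp (Rabs u).
Proof.
  pose proof (exp_ineq1_le u) as H1.
  pose proof (exp_ineq1_le (-u)) as H2.
  assert (Hm : exp u * exp (-u) = 1) by (rewrite <- exp_plus; replace (u + - u) with 0 by ring; apply exp_0).
  pose proof (exp_pos u). pose proof (exp_pos (-u)).
  assert (Hup : exp u - 1 - u <= u * (exp u - 1)) by nra.
  rewrite Rabs_pos_eq by lra.
  destruct (Rle_dec 0 u).
  - rewrite Rabs_pos_eq by lra.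
    assert (exp u - 1 <= u * exp u) by nra. nra.
  - rewrite Rabs_left by lra.
    assert (1 - exp u <= - u) by lra.
    assert (1 <= exp (-u)) by lra. nra.
Qed.

Lemma ball_R (y e z : R) : ball y e z <-> Rabs (z - y) < e.
Proof. reflexivity. Qed.

Definition W (s t : R) : R := Rpower t (s - 1) * exp (- t).

Lemma W_exp s t : W s t = exp ((s - 1) * ln t - t).
Proof. unfold W, Rpower. rewrite <- exp_plus. reflexivity. Qed.

Lemma W_pos s t : 0 < W s t.
Proof. rewrite W_exp. apply exp_pos. Qed.

Lemma W_shift s a t : W (s + a) t = exp (a * ln t) * W s t.
Proof. rewrite !W_exp, <- exp_plus. f_equal. ring. Qed.

Lemma W_succ s t : 0 < t -> W (s + 1) t = t * W s t.
Proof. intros Ht. rewrite W_shift, Rmult_1_l, exp_ln; auto. Qed.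

Lemma W_cont s t : 0 < t -> continuous (W s) t.
Proof.
  intros Ht. apply (@ex_derive_continuous R_AbsRing R_NormedModule).
  apply ex_derive_ext with (fun t => exp ((s - 1) * ln t - t)).
  intros; rewrite W_exp; auto. auto_derive. auto.
Qed.

Lemma Wln_cont s t : 0 < t -> continuous (fun t => W s t * ln t) t.
Proof.
  intros Ht. apply (@ex_derive_continuous R_AbsRing R_NormedModule).
  apply ex_derive_ext with (fun t => exp ((s - 1) * ln t - t) * ln t).
  intros; rewrite W_exp; auto. auto_derive. auto.
Qed.

Lemma Wln2_cont s t : 0 < t -> continuous (fun t => W s t * (ln t)^2) t.
Proof.
  intros Ht. apply (@ex_derive_continuous R_AbsRing R_NormedModule).
  apply ex_derive_ext with (fun t => exp ((s - 1) * ln t - t) * (ln t)^2).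
  intros; rewrite W_exp; auto. auto_derive. auto.
Qed.

Definition IG (f : R -> R) (l : R) := is_RInt_gen f (at_right 0) (Rbar_locally p_infty) l.

Definition pcont (f : R -> R) := forall t, 0 < t -> continuous f t.

Lemma pcont_exRInt f a b : pcont f -> 0 < a -> a <= b -> ex_RInt f a b.
Proof.
  intros Hf Ha Hab. apply (@ex_RInt_continuous R_CompleteNormedModule). intros z Hz.
  apply Hf. rewrite Rmin_left in Hz by lra. lra.
Qed.

Lemma pos_int (f : R -> R) (M : R) :
  pcont f -> (forall t, 0 < t -> 0 <= f t) ->
  (forall a b, 0 < a -> a <= b -> RInt f a b <= M) ->
  exists S, IG f S /\ (forall a b, 0 < a -> a <= b -> RInt f a b <= S).
Proof.
  intros Hc Hp HM.
  set (E := fun y => exists a b, 0 < a /\ a <= b /\ y = RInt f a b).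
  destruct (completeness E) as [S [HS1 HS2]].
  { exists M. intros y [a [b [Ha [Hab ->]]]]. auto. }
  { exists (RInt f 1 1). exists 1, 1. repeat split; lra. }
  assert (Hle : forall a b, 0 < a -> a <= b -> RInt f a b <= S).
  { intros a b Ha Hab. apply HS1. exists a, b. auto. }
  assert (Hmon : forall a a' b b', 0 < a -> a <= a' -> a' <= b' -> b' <= b ->
             RInt f a' b' <= RInt f a b).
  { intros a a' b b' Ha H1 H2 H3.
    rewrite <- (RInt_Chasles f a a' b), <- (RInt_Chasles f a' b' b).
    - assert (0 <= RInt f a a').
      { apply RInt_ge_0; auto. apply pcont_exRInt; [auto|lra|lra]. intros; apply Hp; lra. }
      assert (0 <= RInt f b' b).
      { apply RInt_ge_0; auto. apply pcont_exRInt; [auto|lra|lra]. intros; apply Hp; lra. }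
      unfold plus; simpl. lra.
    - apply pcont_exRInt; [auto|lra|lra].
    - apply pcont_exRInt; [auto|lra|lra].
    - apply pcont_exRInt; [auto|lra|lra].
    - apply pcont_exRInt; [auto|lra|lra]. }
  exists S. split; auto.
  intros P [eps HP].
  assert (Hex : exists a0 b0, 0 < a0 /\ a0 <= b0 /\ S - eps < RInt f a0 b0).
  { destruct (Rlt_dec (S - eps) S) as [_|]; [|destruct eps; simpl in *; lra].
    apply Classical_Prop.NNPP. intros Hn.
    assert (S <= S - eps). { apply HS2. intros y [a [b [Ha [Hab ->]]]].
      apply Rnot_lt_le. intros Hl. apply Hn. exists a, b. auto. }
    destruct eps; simpl in *; lra. }
  destruct Hex as [a0 [b0 [Ha0 [Hab0 Hlt]]]].
  exists (fun a => 0 < a < a0) (fun b => b0 < b).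
  - exists (mkposreal a0 Ha0). intros y Hy Hy0. split; auto.
    assert (Hy1 : Rabs (y - 0) < a0) by (apply ball_R; exact Hy). rewrite Rminus_0_r, Rabs_pos_eq in Hy1; lra.
  - exists b0. auto.
  - intros a b Ha Hb. simpl. exists (RInt f a b). split.
    + apply (@RInt_correct R_CompleteNormedModule). apply pcont_exRInt; [auto|lra|lra].
    + apply HP. apply ball_R.
      assert (RInt f a0 b0 <= RInt f a b) by (apply Hmon; lra).
      assert (RInt f a b <= S) by (apply Hle; lra).
      rewrite Rabs_left1 by lra. lra.
Qed.

Definition Bnd (f : R -> R) := exists M, forall a b, 0 < a -> a <= b -> RInt f a b <= M.

Lemma pcont_plus f g : pcont f -> pcont g -> pcont (fun t => f t + g t).
Proof. intros Hf Hg t Ht. apply (@continuous_plus R_UniformSpace R_AbsRing R_NormedModule f g t); auto. Qed.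

Lemma pcont_minus f g : pcont f -> pcont g -> pcont (fun t => f t - g t).
Proof. intros Hf Hg t Ht. apply (@continuous_minus R_UniformSpace R_AbsRing R_NormedModule f g t); auto. Qed.

Lemma pcont_scal c f : pcont f -> pcont (fun t => c * f t).
Proof. intros Hf t Ht. apply (@continuous_scal_r R_UniformSpace R_AbsRing R_NormedModule c f t); auto. Qed.

Lemma Bnd_le f g : pcont f -> pcont g -> (forall t, 0 < t -> f t <= g t) -> Bnd g -> Bnd f.
Proof.
  intros Hf Hg Hfg [M HM]. exists M. intros a b Ha Hab.
  apply Rle_trans with (RInt g a b); auto.
  apply RInt_le; auto; try (apply pcont_exRInt; auto).
  intros; apply Hfg; lra.
Qed.

Lemma Bnd_plus f g : pcont f -> pcont g -> Bnd f -> Bnd g -> Bnd (fun t => f t + g t).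
Proof.
  intros Hf Hg [M HM] [N HN]. exists (M + N). intros a b Ha Hab.
  assert (E: RInt (fun t => f t + g t) a b = RInt f a b + RInt g a b)
    by (apply (RInt_plus f g); apply pcont_exRInt; auto).
  rewrite E. specialize (HM a b Ha Hab). specialize (HN a b Ha Hab). lra.
Qed.

Lemma Bnd_scal c f : 0 <= c -> pcont f -> Bnd f -> Bnd (fun t => c * f t).
Proof.
  intros Hc Hf [M HM]. exists (c * M). intros a b Ha Hab.
  assert (E: RInt (fun t => c * f t) a b = c * RInt f a b)
    by (apply (RInt_scal f); apply pcont_exRInt; auto).
  rewrite E. specialize (HM a b Ha Hab). nra.
Qed.

Lemma IG_pos f : pcont f -> (forall t, 0 < t -> 0 <= f t) -> Bnd f ->
  exists S, IG f S /\ (forall a b, 0 < a -> a <= b -> RInt f a b <= S).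
Proof. intros Hc Hp [M HM]. eapply pos_int; eauto. Qed.

Lemma IG_dom f g : pcont f -> pcont g -> (forall t, 0 < t -> Rabs (f t) <= g t) -> Bnd g ->
  exists l, IG f l.
Proof.
  intros Hf Hg Hfg Hb.
  assert (Hfg2 : pcont (fun t => f t + g t)) by (apply pcont_plus; auto).
  destruct (IG_pos (fun t => f t + g t)) as [S1 [H1 _]]; auto.
  { intros t Ht. specialize (Hfg t Ht). apply Rabs_le_between in Hfg. lra. }
  { apply Bnd_le with (fun t => 2 * g t); auto. apply pcont_scal; auto.
    intros t Ht. specialize (Hfg t Ht). apply Rabs_le_between in Hfg. lra.
    apply Bnd_scal; auto; lra. }
  destruct (IG_pos g) as [S2 [H2 _]]; auto.
  { intros t Ht. specialize (Hfg t Ht). pose proof (Rabs_pos (f t)). lra. }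
  exists (minus S1 S2).
  pose proof (is_RInt_gen_minus _ _ _ _ H1 H2) as H.
  replace f with (fun y => minus (f y + g y) (g y)). exact H.
  apply functional_extensionality. intros y. unfold minus, plus, opp; simpl. ring.
Qed.

Definition gs (s t : R) := exp ((s - 1) * ln t - (s + 1) * ln (1 + t)).
Definition Gs (s t : R) := exp (s * (ln t - ln (1 + t))) / s.

Lemma Gs_deriv s t : 0 < s -> 0 < t -> is_derive (Gs s) t (gs s t).
Proof.
  intros Hs Ht. unfold Gs, gs. auto_derive.
  - repeat split; lra.
  - replace ((s - 1) * ln t - (s + 1) * ln (1 + t)) with
     (s * (ln t + - ln (1 + t)) + (- ln t) + (- ln (1 + t))) by ring.
    rewrite !exp_plus, !exp_Ropp, !exp_ln by lra. field. lra.
Qed.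

Lemma gs_cont s t : 0 < t -> continuous (gs s) t.
Proof.
  intros Ht. apply (@ex_derive_continuous R_AbsRing R_NormedModule).
  unfold gs. auto_derive. lra.
Qed.

Lemma Bnd_gs s : 0 < s -> Bnd (gs s).
Proof.
  intros Hs. exists (/ s). intros a b Ha Hab.
  assert (H : is_RInt (gs s) a b (minus (Gs s b) (Gs s a))).
  { apply (@is_RInt_derive R_CompleteNormedModule).
    - intros x Hx. rewrite Rmin_left in Hx by lra. apply Gs_deriv; lra.
    - intros x Hx. rewrite Rmin_left in Hx by lra. apply gs_cont; lra. }
  rewrite (is_RInt_unique _ _ _ _ H). unfold minus, plus, opp; simpl.
  unfold Gs.
  assert (exp (s * (ln b - ln (1 + b))) <= 1).
  { assert (ln b <= ln (1 + b)) by (apply ln_le; lra).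
    apply Rle_trans with (exp 0); [apply exp_le_inc | rewrite exp_0; lra].
    apply Rmult_le_reg_l with (/ s). apply Rinv_0_lt_compat; lra.
    rewrite Rmult_0_r, <- Rmult_assoc, Rinv_l by lra. lra. }
  pose proof (exp_pos (s * (ln a - ln (1 + a)))).
  assert (0 < / s) by (apply Rinv_0_lt_compat; lra).
  unfold Rdiv. nra.
Qed.

Lemma W_le_gs s t : 0 < s -> 0 < t ->
  W s t <= exp ((s + 1) * ln (s + 1) - s) * gs s t.
Proof.
  intros Hs Ht. rewrite W_exp. unfold gs. rewrite <- exp_plus. apply exp_le_inc.
  assert (H := ln_le_sub1 ((1 + t) / (s + 1))). rewrite ln_div in H by lra.
  assert (H1 : ln (1 + t) - ln (s + 1) <= (1 + t) / (s + 1) - 1) by (apply H; apply Rdiv_lt_0_compat; lra).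
  apply Rmult_le_compat_l with (r := s + 1) in H1; [|lra].
  replace ((s + 1) * ((1 + t) / (s + 1) - 1)) with (t - s) in H1 by (field; lra).
  nra.
Qed.

Lemma Bnd_W s : 0 < s -> Bnd (W s).
Proof.
  intros Hs. apply Bnd_le with (fun t => exp ((s + 1) * ln (s + 1) - s) * gs s t).
  - intros t Ht; apply W_cont; auto.
  - apply pcont_scal. intros t Ht; apply gs_cont; auto.
  - intros; apply W_le_gs; auto.
  - apply Bnd_scal. left; apply exp_pos. intros t Ht; apply gs_cont; auto. apply Bnd_gs; auto.
Qed.

Definition IGv (f : R -> R) := RInt_gen f (at_right 0) (Rbar_locally p_infty).

Lemma IG_unique f l : IG f l -> IGv f = l.
Proof. intros H. apply (is_RInt_gen_unique f l H). Qed.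

Lemma IG_ex f : (exists l, IG f l) -> IG f (IGv f).
Proof. intros [l H]. rewrite (IG_unique _ _ H). auto. Qed.

Lemma absln_le eps t : 0 < eps ->
  Rabs (ln t) <= (exp (eps * ln t) + exp (- eps * ln t)) / eps.
Proof.
  intros He. pose proof (exp_pos (eps * ln t)). pose proof (exp_pos (- eps * ln t)).
  assert (eps * Rabs (ln t) <= exp (eps * ln t) + exp (- eps * ln t)).
  { destruct (Rle_dec 0 (ln t)).
    - rewrite Rabs_pos_eq by lra. pose proof (exp_ge_id (eps * ln t)). lra.
    - rewrite Rabs_left by lra. pose proof (exp_ge_id (- eps * ln t)). nra. }
  replace (Rabs (ln t)) with ((eps * Rabs (ln t)) / eps) by (field; lra).
  unfold Rdiv; apply Rmult_le_compat_r; auto. left; apply Rinv_0_lt_compat; auto.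
Qed.

Lemma ln2_le eps t : 0 < eps ->
  (ln t)^2 <= 4 / eps^2 * (exp (eps * ln t) + exp (- eps * ln t)).
Proof.
  intros He. pose proof (exp_pos (eps * ln t)). pose proof (exp_pos (- eps * ln t)).
  assert (Hk : forall v, 0 <= v -> (v/2)^2 <= exp v).
  { intros v Hv. pose proof (exp_ge_id (v/2)).
    replace v with (v/2 + v/2) at 2 by field. rewrite exp_plus. nra. }
  assert (H2 : (eps * Rabs (ln t) / 2)^2 <= exp (eps * ln t) + exp (- eps * ln t)).
  { destruct (Rle_dec 0 (ln t)).
    - rewrite Rabs_pos_eq by lra. pose proof (Hk (eps * ln t)). nra.
    - rewrite Rabs_left by lra. pose proof (Hk (- eps * ln t)).
      replace (eps * - ln t) with (- eps * ln t) by ring. nra. }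
  replace ((eps * Rabs (ln t) / 2)^2) with (eps^2/4 * (ln t)^2) in H2.
  2:{ replace ((eps * Rabs (ln t) / 2)^2) with (eps^2/4 * (Rabs (ln t))^2) by (field). rewrite pow2_abs. auto. }
  apply Rmult_le_reg_l with (eps^2/4). nra.
  replace (eps ^ 2 / 4 * (4 / eps ^ 2 * (exp (eps * ln t) + exp (- eps * ln t)))) with
    (exp (eps * ln t) + exp (- eps * ln t)) by (field; lra). lra.
Qed.

Lemma Wln_dom s eps t : 0 < eps ->
  Rabs (W s t * ln t) <= / eps * (W (s + eps) t + W (s - eps) t).
Proof.
  intros He. rewrite Rabs_mult, Rabs_pos_eq by (left; apply W_pos).
  unfold Rminus. rewrite !W_shift. pose proof (absln_le eps t He). pose proof (W_pos s t).
  replace (- eps * ln t) with (-eps * ln t) in H by ring.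
  unfold Rdiv in H. nra.
Qed.

Lemma Wln2_dom s eps t : 0 < eps ->
  W s t * (ln t)^2 <= 4 / eps^2 * (W (s + eps) t + W (s - eps) t).
Proof.
  intros He. unfold Rminus. rewrite !W_shift. pose proof (ln2_le eps t He). pose proof (W_pos s t).
  nra.
Qed.

Lemma Bnd_Wln2 s : 0 < s -> Bnd (fun t => W s t * (ln t)^2).
Proof.
  intros Hs. apply Bnd_le with (fun t => 4 / (s/2)^2 * (W (s + s/2) t + W (s - s/2) t)).
  - intros t Ht; apply Wln2_cont; auto.
  - apply pcont_scal, pcont_plus; intros t Ht; apply W_cont; auto.
  - intros t Ht. apply Wln2_dom. lra.
  - apply Bnd_scal. left. apply Rdiv_lt_0_compat; nra.
    apply pcont_plus; intros t Ht; apply W_cont; auto.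
    apply Bnd_plus; try (intros t Ht; apply W_cont; auto); apply Bnd_W; lra.
Qed.

Lemma IG_W s : 0 < s -> IG (W s) (Gamma s).
Proof.
  intros Hs. apply IG_ex. destruct (IG_pos (W s)) as [S [H _]].
  - intros t Ht; apply W_cont; auto.
  - intros; left; apply W_pos.
  - apply Bnd_W; auto.
  - exists S; auto.
Qed.

Definition G1 s := IGv (fun t => W s t * ln t).

Lemma IG_Wln s : 0 < s -> IG (fun t => W s t * ln t) (G1 s).
Proof.
  intros Hs. apply IG_ex. apply IG_dom with (fun t => / (s/2) * (W (s + s/2) t + W (s - s/2) t)).
  - intros t Ht; apply Wln_cont; auto.
  - apply pcont_scal, pcont_plus; intros t Ht; apply W_cont; auto.
  - intros t Ht. apply Wln_dom. lra.
  - apply Bnd_scal. left. apply Rinv_0_lt_compat; lra.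
    apply pcont_plus; intros t Ht; apply W_cont; auto.
    apply Bnd_plus; try (intros t Ht; apply W_cont; auto); apply Bnd_W; lra.
Qed.

Definition G2 s := IGv (fun t => W s t * (ln t)^2).

Lemma IG_Wln2 s : 0 < s -> IG (fun t => W s t * (ln t)^2) (G2 s).
Proof.
  intros Hs. apply IG_ex. destruct (IG_pos (fun t => W s t * (ln t)^2)) as [S [H _]].
  - intros t Ht; apply Wln2_cont; auto.
  - intros. pose proof (W_pos s t). pose proof (pow2_ge_0 (ln t)). nra.
  - apply Bnd_Wln2; auto.
  - exists S; auto.
Qed.

Lemma fprod_pos : filter_prod (at_right 0) (Rbar_locally p_infty)
   (fun ab => 0 < fst ab /\ fst ab <= snd ab).
Proof.
  exists (fun a => 0 < a < 1) (fun b => 1 < b).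
  - exists (mkposreal 1 Rlt_0_1). intros y Hy Hy0. split; auto.
    assert (Hy1 : Rabs (y - 0) < 1) by (apply ball_R; exact Hy).
    rewrite Rminus_0_r, Rabs_pos_eq in Hy1; lra.
  - exists 1. auto.
  - intros a b Ha Hb. simpl. lra.
Qed.

Lemma IG_norm_le f g lf lg : IG f lf -> IG g lg ->
  (forall t, 0 < t -> Rabs (f t) <= g t) -> Rabs lf <= lg.
Proof.
  intros Hf Hg Hfg.
  apply (@RInt_gen_norm R_CompleteNormedModule (at_right 0) (Rbar_locally p_infty) _ _ f g lf lg); auto.
  - eapply filter_imp; [|exact fprod_pos]. intros ab [H1 H2]; exact H2.
  - eapply filter_imp; [|exact fprod_pos]. intros [a b] [H1 H2] t Ht. simpl in *.
    apply Hfg. lra.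
Qed.

Lemma IG_zero : IG (fun _ => 0) 0.
Proof.
  intros P [eps HP]. unfold filtermapi. eapply filter_imp; [|exact fprod_pos].
  intros [a b] _. exists 0. split. simpl.
  pose proof (@is_RInt_const R_NormedModule a b 0) as K.
  unfold scal in K; simpl in K; unfold mult in K; simpl in K. rewrite Rmult_0_r in K. exact K.
  apply HP. apply ball_center.
Qed.

Lemma IG_ge0 f l : IG f l -> (forall t, 0 < t -> 0 <= f t) -> 0 <= l.
Proof.
  intros H Hp. pose proof (IG_norm_le (fun _ => 0) f 0 l IG_zero H) as K.
  rewrite Rabs_R0 in K. apply K. intros t Ht. rewrite Rabs_R0. auto.
Qed.

Lemma IG_minus f g lf lg : IG f lf -> IG g lg -> IG (fun t => f t - g t) (lf - lg).
Proof. intros Hf Hg. apply (is_RInt_gen_minus f g lf lg Hf Hg). Qed.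

Lemma IG_plus f g lf lg : IG f lf -> IG g lg -> IG (fun t => f t + g t) (lf + lg).
Proof. intros Hf Hg. apply (is_RInt_gen_plus f g lf lg Hf Hg). Qed.

Lemma IG_scal c f lf : IG f lf -> IG (fun t => c * f t) (c * lf).
Proof. intros Hf. apply (is_RInt_gen_scal f c lf Hf). Qed.

Lemma IG_ext f g l : (forall t, f t = g t) -> IG f l -> IG g l.
Proof. intros E H. replace g with f; auto. apply functional_extensionality; auto. Qed.

Lemma IG_uniq f l1 l2 : IG f l1 -> IG f l2 -> l1 = l2.
Proof. intros H1 H2. rewrite <- (IG_unique _ _ H1). apply IG_unique; auto. Qed.

Lemma exp_abs_le d L : 0 <= d -> exp (d * Rabs L) <= exp (d * L) + exp (- d * L).
Proof.
  intros Hd. pose proof (exp_pos (d * L)). pose proof (exp_pos (- d * L)).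
  destruct (Rle_dec 0 L).
  - rewrite Rabs_pos_eq by lra. lra.
  - rewrite Rabs_left by lra. replace (d * - L) with (- d * L) by ring. lra.
Qed.

Lemma quot_bound x h d t : 0 < t -> h <> 0 -> Rabs h <= d ->
  Rabs (/ h * (W (x + h) t - W x t) - W x t * ln t)
   <= Rabs h * (W (x + d) t * (ln t)^2 + W (x - d) t * (ln t)^2).
Proof.
  intros Ht Hh Hhd.
  set (L := ln t).
  assert (E : / h * (W (x + h) t - W x t) - W x t * L = W x t * (/ h * (exp (h * L) - 1 - h * L))).
  { rewrite W_shift. unfold L. field. auto. }
  rewrite E. clear E.
  unfold Rminus at 3. rewrite !W_shift.
  pose proof (W_pos x t) as Hw.
  rewrite Rabs_mult, (Rabs_pos_eq (W x t)) by lra.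
  rewrite Rabs_mult, Rabs_inv.
  pose proof (expm1_bound (h * L)) as B.
  assert (Hd : 0 <= d) by (pose proof (Rabs_pos h); lra).
  assert (B2 : exp (Rabs (h * L)) <= exp (d * L) + exp (- d * L)).
  { eapply Rle_trans; [|apply exp_abs_le; auto]. apply exp_le_inc.
    rewrite Rabs_mult. apply Rmult_le_compat_r; auto. apply Rabs_pos. }
  assert (Hh' : 0 < Rabs h) by (apply Rabs_pos_lt; auto).
  assert (Sq : (h * L)^2 = Rabs h ^ 2 * L^2) by (rewrite pow2_abs; ring).
  rewrite Sq in B.
  set (a := Rabs h) in *. set (r := Rabs (exp (h * L) - 1 - h * L)) in *.
  set (E := exp (d * L) + exp (- d * L)) in *.
  assert (Hr : r <= a^2 * L^2 * E).
  { eapply Rle_trans; [exact B|]. apply Rmult_le_compat_l; auto.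
    apply Rmult_le_pos; apply pow2_ge_0. }
  assert (Hia : / a * a = 1) by (field; lra).
  assert (0 < / a) by (apply Rinv_0_lt_compat; lra).
  assert (/ a * r <= a * L^2 * E).
  { apply Rle_trans with (/ a * (a^2 * L^2 * E)).
    apply Rmult_le_compat_l; lra.
    right. field. lra. }
  replace (a * (exp (d * ln t) * W x t * L ^ 2 + exp (- d * ln t) * W x t * L ^ 2))
    with (W x t * (a * L^2 * E)) by (unfold E, L; ring).
  apply Rmult_le_compat_l; lra.
Qed.

Lemma Gamma_deriv x : 0 < x -> is_derive Gamma x (G1 x).
Proof.
  intros Hx. apply is_derive_Reals. intros eps Heps.
  set (d := x / 2).
  set (K := G2 (x + d) + G2 (x - d)).
  assert (HK : 0 <= K).
  { unfold K. pose proof (IG_Wln2 (x + d)) as H1. pose proof (IG_Wln2 (x - d)) as H2.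
    assert (0 <= G2 (x + d)). { apply (IG_ge0 _ _ (H1 ltac:(unfold d; lra))).
      intros. pose proof (W_pos (x+d) t). pose proof (pow2_ge_0 (ln t)). nra. }
    assert (0 <= G2 (x - d)). { apply (IG_ge0 _ _ (H2 ltac:(unfold d; lra))).
      intros. pose proof (W_pos (x-d) t). pose proof (pow2_ge_0 (ln t)). nra. }
    lra. }
  assert (Hd : 0 < d) by (unfold d; lra).
  assert (Hdel : 0 < Rmin d (eps / (K + 1))).
  { apply Rmin_pos; auto. apply Rdiv_lt_0_compat; lra. }
  exists (mkposreal _ Hdel). intros h Hh0 Hh. simpl in Hh.
  assert (Hhd : Rabs h <= d) by (pose proof (Rmin_l d (eps / (K + 1))); lra).
  assert (Hhe : Rabs h < eps / (K + 1)) by (pose proof (Rmin_r d (eps / (K + 1))); lra).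
  assert (Hxh : 0 < x + h) by (apply Rabs_le_between in Hhd; unfold d in *; lra).
  assert (I1 : IG (fun t => / h * (W (x + h) t - W x t) - W x t * ln t)
                  (/ h * (Gamma (x + h) - Gamma x) - G1 x)).
  { apply IG_minus. apply IG_scal. apply IG_minus; apply IG_W; auto. apply IG_Wln; auto. }
  assert (I2 : IG (fun t => Rabs h * (W (x + d) t * (ln t)^2 + W (x - d) t * (ln t)^2))
                  (Rabs h * K)).
  { apply IG_scal. apply IG_plus; apply IG_Wln2; unfold d; lra. }
  pose proof (IG_norm_le _ _ _ _ I1 I2 ltac:(intros t Ht; apply quot_bound; auto)) as B.
  replace ((Gamma (x + h) - Gamma x) / h - G1 x) with (/ h * (Gamma (x + h) - Gamma x) - G1 x)
    by (field; auto).
  eapply Rle_lt_trans; [exact B|].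
  apply Rle_lt_trans with (Rabs h * (K + 1)). pose proof (Rabs_pos h). nra.
  apply Rmult_lt_reg_r with (/ (K + 1)). apply Rinv_0_lt_compat; lra.
  rewrite Rmult_assoc, Rinv_r, Rmult_1_r by lra. exact Hhe.
Qed.

Lemma Derive_Gamma x : 0 < x -> Derive Gamma x = G1 x.
Proof. intros Hx. apply is_derive_unique. apply Gamma_deriv; auto. Qed.

Lemma digamma_eq x : 0 < x -> digamma x = G1 x / Gamma x.
Proof. intros Hx. unfold digamma. rewrite Derive_Gamma; auto. Qed.

Lemma IG_FTC F f L0 L1 : (forall t, 0 < t -> is_derive F t (f t)) -> pcont f ->
  filterlim F (at_right 0) (locally L0) -> filterlim F (Rbar_locally p_infty) (locally L1) ->
  IG f (L1 - L0).
Proof.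
  intros HD Hc H0 H1.
  assert (HDe : forall t, 0 < t -> Derive F t = f t) by (intros; apply is_derive_unique; auto).
  assert (H : is_RInt_gen (Derive F) (at_right 0) (Rbar_locally p_infty) (L1 - L0)).
  { apply is_RInt_gen_Derive; auto.
    - eapply filter_imp; [|exact fprod_pos]. intros [a b] [Ha Hab] t Ht. simpl in *.
      rewrite Rmin_left in Ht by lra. exists (f t). apply HD. lra.
    - eapply filter_imp; [|exact fprod_pos]. intros [a b] [Ha Hab] t Ht. simpl in *.
      rewrite Rmin_left in Ht by lra.
      apply continuous_ext_loc with f.
      + assert (Htp : 0 < t) by lra.
        exists (mkposreal t Htp). intros y Hy. assert (Hy1 : Rabs (y - t) < t) by (apply ball_R; exact Hy).
        symmetry. apply HDe. apply Rabs_lt_between in Hy1. lra.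
      + apply Hc. lra. }
  apply (is_RInt_gen_ext (Derive F) f); auto.
  eapply filter_imp; [|exact fprod_pos]. intros [a b] [Ha Hab] t Ht. simpl in *.
  rewrite Rmin_left in Ht by lra. apply HDe. lra.
Qed.

Lemma lim0_dom {Fil} {FF : Filter Fil} (F g : R -> R) :
  Fil (fun t => Rabs (F t) <= g t) -> filterlim g Fil (locally 0) -> filterlim F Fil (locally 0).
Proof.
  intros Hb Hg. apply filterlim_locally. intros eps.
  apply filterlim_locally with (eps := eps) in Hg.
  generalize (filter_and _ _ Hb Hg). apply filter_imp. intros t [H1 H2].
  assert (H3 : Rabs (g t - 0) < eps) by (apply ball_R; exact H2).
  apply ball_R. rewrite Rminus_0_r in *.
  pose proof (Rabs_pos (F t)). apply Rabs_lt_between in H3. lra.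
Qed.

Lemma lim_right0 C a : 0 < a -> filterlim (fun t => C * exp (a * ln t)) (at_right 0) (locally 0).
Proof.
  intros Ha. apply filterlim_locally. intros eps.
  set (c := Rabs C + 1).
  assert (Hc : 0 < c) by (unfold c; pose proof (Rabs_pos C); lra).
  set (del := Rmin 1 (exp (ln (eps / c) / a))).
  assert (Hdel : 0 < del) by (apply Rmin_pos; [lra|apply exp_pos]).
  exists (mkposreal del Hdel). intros y Hy Hy0. simpl in Hy.
  assert (Hy1 : Rabs (y - 0) < del) by (apply ball_R; exact Hy).
  rewrite Rminus_0_r, Rabs_pos_eq in Hy1 by lra.
  apply ball_R. rewrite Rminus_0_r, Rabs_mult.
  assert (Hy2 : y < exp (ln (eps / c) / a)) by (pose proof (Rmin_r 1 (exp (ln (eps / c) / a))); unfold del in Hy1; lra).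
  assert (Hl : ln y < ln (eps / c) / a).
  { rewrite <- (ln_exp (ln (eps / c) / a)). apply ln_increasing; auto. }
  assert (He : exp (a * ln y) < eps / c).
  { rewrite <- (exp_ln (eps / c)) by (apply Rdiv_lt_0_compat; auto; apply cond_pos).
    apply exp_increasing.
    apply Rmult_lt_reg_r with (/ a). apply Rinv_0_lt_compat; auto.
    replace (a * ln y * / a) with (ln y) by (field; lra). exact Hl. }
  rewrite (Rabs_pos_eq (exp _)) by (left; apply exp_pos).
  assert (Rabs C <= c) by (unfold c; lra).
  pose proof (exp_pos (a * ln y)). pose proof (Rabs_pos C).
  apply Rle_lt_trans with (c * exp (a * ln y)). nra.
  replace (pos eps) with (c * (eps / c)) by (field; lra).
  apply Rmult_lt_compat_l; auto.
Qed.

Lemma lim_pinf C : filterlim (fun t => C * exp (- t / 2)) (Rbar_locally p_infty) (locally 0).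
Proof.
  apply filterlim_locally. intros eps.
  set (c := Rabs C + 1).
  assert (Hc : 0 < c) by (unfold c; pose proof (Rabs_pos C); lra).
  exists (- 2 * ln (eps / c)). intros y Hy.
  apply ball_R. rewrite Rminus_0_r, Rabs_mult.
  assert (He : exp (- y / 2) < eps / c).
  { rewrite <- (exp_ln (eps / c)) by (apply Rdiv_lt_0_compat; auto; apply cond_pos).
    apply exp_increasing. lra. }
  rewrite (Rabs_pos_eq (exp _)) by (left; apply exp_pos).
  assert (Rabs C <= c) by (unfold c; lra).
  pose proof (exp_pos (- y / 2)). pose proof (Rabs_pos C).
  apply Rle_lt_trans with (c * exp (- y / 2)). nra.
  replace (pos eps) with (c * (eps / c)) by (field; lra).
  apply Rmult_lt_compat_l; auto.
Qed.

Lemma ev_right01 : at_right 0 (fun t => 0 < t < 1).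
Proof.
  exists (mkposreal 1 Rlt_0_1). intros y Hy Hy0. split; auto.
  assert (Hy1 : Rabs (y - 0) < 1) by (apply ball_R; exact Hy).
  rewrite Rminus_0_r, Rabs_pos_eq in Hy1; simpl in *; lra.
Qed.

Lemma ev_pinf1 : Rbar_locally p_infty (fun t => 1 < t).
Proof. exists 1. auto. Qed.

Lemma bound0 s t : 0 < s -> 0 < t < 1 ->
  Rabs (W (s + 1) t) <= (1 + 2 / s) * exp (s / 2 * ln t) /\
  Rabs (W (s + 1) t * ln t) <= (1 + 2 / s) * exp (s / 2 * ln t).
Proof.
  intros Hs [Ht0 Ht1].
  assert (Hl : ln t < 0) by (rewrite <- ln_1; apply ln_increasing; lra).
  assert (HW : W (s + 1) t <= exp (s * ln t)).
  { rewrite W_exp. apply exp_le_inc. lra. }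
  assert (HW2 : exp (s * ln t) <= exp (s / 2 * ln t)).
  { apply exp_le_inc. nra. }
  pose proof (W_pos (s + 1) t). pose proof (exp_pos (s / 2 * ln t)).
  assert (Hln : - ln t <= 2 / s * exp (- (s / 2) * ln t)).
  { pose proof (exp_ge_id (- (s / 2) * ln t)).
    apply Rmult_le_reg_l with (s / 2). lra.
    replace (s / 2 * (2 / s * exp (- (s / 2) * ln t))) with (exp (- (s / 2) * ln t)) by (field; lra).
    lra. }
  assert (Hprod : exp (s * ln t) * exp (- (s / 2) * ln t) = exp (s / 2 * ln t)).
  { rewrite <- exp_plus. f_equal. field. }
  assert (0 < 2 / s) by (apply Rdiv_lt_0_compat; lra).
  split.
  - rewrite Rabs_pos_eq by lra. nra.
  - rewrite Rabs_mult, Rabs_pos_eq by lra. rewrite Rabs_left by lra.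
    apply Rle_trans with (exp (s * ln t) * (2 / s * exp (- (s / 2) * ln t))).
    apply Rmult_le_compat; lra.
    rewrite Rmult_comm, Rmult_assoc, (Rmult_comm _ (exp (s * ln t))), Hprod. nra.
Qed.

Lemma bound_inf s t : 0 < s -> 1 < t ->
  Rabs (W (s + 1) t) <= exp ((s + 1) * ln (2 * (s + 1)) - (s + 1)) * exp (- t / 2) /\
  Rabs (W (s + 1) t * ln t) <= exp ((s + 1) * ln (2 * (s + 1)) - (s + 1)) * exp (- t / 2).
Proof.
  intros Hs Ht.
  assert (Hl : 0 < ln t) by (rewrite <- ln_1; apply ln_increasing; lra).
  assert (Hlt : ln t <= t) by (pose proof (ln_le_sub1 t); lra).
  set (m := s + 1).
  assert (Key : exp (m * ln t - t) <= exp (m * ln (2 * m) - m) * exp (- t / 2)).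
  { rewrite <- exp_plus. apply exp_le_inc.
    assert (H := ln_le_sub1 (t / (2 * m))). rewrite ln_div in H by (unfold m; lra).
    assert (H1 : ln t - ln (2 * m) <= t / (2 * m) - 1) by (apply H; apply Rdiv_lt_0_compat; unfold m; lra).
    apply Rmult_le_compat_l with (r := m) in H1; [|unfold m; lra].
    replace (m * (t / (2 * m) - 1)) with (t / 2 - m) in H1 by (field; unfold m; lra).
    lra. }
  pose proof (W_pos (s + 1) t).
  assert (HW : W (s + 1) t * t = exp (m * ln t - t)).
  { rewrite <- (exp_ln t) at 2 by lra. rewrite W_exp, <- exp_plus. f_equal. unfold m. ring. }
  unfold m in *. split.
  - rewrite Rabs_pos_eq by lra. eapply Rle_trans; [|exact Key]. rewrite <- HW. nra.
  - rewrite Rabs_mult, Rabs_pos_eq by lra. rewrite Rabs_pos_eq by lra.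
    eapply Rle_trans; [|exact Key]. rewrite <- HW. nra.
Qed.

Lemma limits_W s : 0 < s ->
  filterlim (W (s + 1)) (at_right 0) (locally 0) /\
  filterlim (fun t => W (s + 1) t * ln t) (at_right 0) (locally 0) /\
  filterlim (W (s + 1)) (Rbar_locally p_infty) (locally 0) /\
  filterlim (fun t => W (s + 1) t * ln t) (Rbar_locally p_infty) (locally 0).
Proof.
  intros Hs. repeat split.
  - apply lim0_dom with (fun t => (1 + 2 / s) * exp (s / 2 * ln t)).
    eapply filter_imp; [|exact ev_right01]. intros t Ht. apply bound0; auto.
    apply lim_right0. lra.
  - apply lim0_dom with (fun t => (1 + 2 / s) * exp (s / 2 * ln t)).
    eapply filter_imp; [|exact ev_right01]. intros t Ht. apply bound0; auto.
    apply lim_right0. lra.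
  - apply lim0_dom with (fun t => exp ((s + 1) * ln (2 * (s + 1)) - (s + 1)) * exp (- t / 2)).
    eapply filter_imp; [|exact ev_pinf1]. intros t Ht. apply bound_inf; auto.
    apply lim_pinf.
  - apply lim0_dom with (fun t => exp ((s + 1) * ln (2 * (s + 1)) - (s + 1)) * exp (- t / 2)).
    eapply filter_imp; [|exact ev_pinf1]. intros t Ht. apply bound_inf; auto.
    apply lim_pinf.
Qed.

Lemma W_div s t : 0 < t -> W s t = W (s + 1) t / t.
Proof. intros Ht. rewrite W_succ by auto. field. lra. Qed.

Lemma D1 s t : 0 < t -> is_derive (W (s + 1)) t (s * W s t - W (s + 1) t).
Proof.
  intros Ht.
  apply is_derive_ext with (fun t => exp (((s + 1) - 1) * ln t - t)).
  { intros; rewrite W_exp; auto. }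
  auto_derive. auto.
  rewrite (W_div s t Ht), W_exp. replace ((s + 1 - 1) * ln t + - t) with ((s + 1 - 1) * ln t - t) by ring. field. lra.
Qed.

Lemma D2 s t : 0 < t -> is_derive (fun t => W (s + 1) t * ln t) t
   (s * (W s t * ln t) - W (s + 1) t * ln t + W s t).
Proof.
  intros Ht.
  apply is_derive_ext with (fun t => exp (((s + 1) - 1) * ln t - t) * ln t).
  { intros; rewrite W_exp; auto. }
  auto_derive. auto.
  rewrite (W_div s t Ht), W_exp. replace ((s + 1 - 1) * ln t + - t) with ((s + 1 - 1) * ln t - t) by ring. field. lra.
Qed.

Lemma Gamma_succ s : 0 < s -> Gamma (s + 1) = s * Gamma s.
Proof.
  intros Hs. destruct (limits_W s Hs) as [L1 [L2 [L3 L4]]].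
  assert (H1 : IG (fun t => s * W s t - W (s + 1) t) (0 - 0)).
  { apply IG_FTC with (W (s + 1)); auto. intros; apply D1; auto.
    apply pcont_minus. apply pcont_scal; intros u Hu; apply W_cont; auto.
    intros u Hu; apply W_cont; auto. }
  assert (H2 : IG (fun t => s * W s t - W (s + 1) t) (s * Gamma s - Gamma (s + 1))).
  { apply IG_minus. apply IG_scal. apply IG_W; auto. apply IG_W; lra. }
  pose proof (IG_uniq _ _ _ H1 H2). lra.
Qed.

Lemma G1_succ s : 0 < s -> G1 (s + 1) = s * G1 s + Gamma s.
Proof.
  intros Hs. destruct (limits_W s Hs) as [L1 [L2 [L3 L4]]].
  assert (H1 : IG (fun t => s * (W s t * ln t) - W (s + 1) t * ln t + W s t) (0 - 0)).
  { apply IG_FTC with (fun t => W (s + 1) t * ln t); auto. intros; apply D2; auto.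
    apply pcont_plus. apply pcont_minus. apply pcont_scal; intros u Hu; apply Wln_cont; auto.
    intros u Hu; apply Wln_cont; auto. intros u Hu; apply W_cont; auto. }
  assert (H2 : IG (fun t => s * (W s t * ln t) - W (s + 1) t * ln t + W s t)
                 (s * G1 s - G1 (s + 1) + Gamma s)).
  { apply IG_plus. apply IG_minus. apply IG_scal. apply IG_Wln; auto. apply IG_Wln; lra.
    apply IG_W; auto. }
  pose proof (IG_uniq _ _ _ H1 H2). lra.
Qed.

Lemma Gamma_pos s : 0 < s -> 0 < Gamma s.
Proof.
  intros Hs. destruct (IG_pos (W s)) as [S [H HS]].
  - intros t Ht; apply W_cont; auto.
  - intros; left; apply W_pos.
  - apply Bnd_W; auto.
  - rewrite (IG_uniq _ _ _ (IG_W s Hs) H).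
    apply Rlt_le_trans with (RInt (W s) 1 2); [|apply HS; lra].
    apply RInt_gt_0. lra. intros; apply W_pos. intros; apply W_cont; lra.
Qed.

Lemma G1_upper y : 0 < y -> G1 y <= ln y * Gamma y.
Proof.
  intros Hy.
  assert (H : IG (fun t => ((ln y - 1) * W y t + / y * W (y + 1) t) - W y t * ln t)
                 (((ln y - 1) * Gamma y + / y * Gamma (y + 1)) - G1 y)).
  { apply IG_minus. apply IG_plus; apply IG_scal; apply IG_W; lra. apply IG_Wln; auto. }
  apply IG_ge0 in H.
  - rewrite Gamma_succ in H by auto. replace (/ y * (y * Gamma y)) with (Gamma y) in H by (field; lra).
    lra.
  - intros t Ht. rewrite W_succ by auto. pose proof (W_pos y t).
    pose proof (ln_le_sub1 (t / y) ltac:(apply Rdiv_lt_0_compat; lra)) as K.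
    rewrite ln_div in K by lra.
    replace ((ln y - 1) * W y t + / y * (t * W y t) - W y t * ln t)
      with (W y t * ((t / y - 1) - (ln t - ln y))) by (field; lra).
    apply Rmult_le_pos; lra.
Qed.

Lemma G1_lower x : 0 < x -> G1 x >= Gamma x * ln x - Gamma x / x.
Proof.
  intros Hx.
  assert (H : IG (fun t => W (x + 1) t * ln t - (ln x + 1) * W (x + 1) t + x * W x t)
                 (G1 (x + 1) - (ln x + 1) * Gamma (x + 1) + x * Gamma x)).
  { apply IG_plus. apply IG_minus. apply IG_Wln; lra. apply IG_scal; apply IG_W; lra.
    apply IG_scal; apply IG_W; lra. }
  apply IG_ge0 in H.
  - rewrite Gamma_succ, G1_succ in H by auto.
    apply Rle_ge. apply Rmult_le_reg_l with x; auto.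
    replace (x * (Gamma x * ln x - Gamma x / x)) with (x * Gamma x * ln x - Gamma x) by (field; lra).
    nra.
  - intros t Ht. rewrite W_succ by auto. pose proof (W_pos x t).
    pose proof (ln_le_sub1 (x / t) ltac:(apply Rdiv_lt_0_compat; lra)) as K.
    rewrite ln_div in K by lra.
    replace (t * W x t * ln t - (ln x + 1) * (t * W x t) + x * W x t)
      with ((W x t * t) * ((x / t - 1) - (ln x - ln t))) by (field; lra).
    apply Rmult_le_pos; nra.
Qed.

Definition psi x := G1 x / Gamma x.

Lemma psi_succ x : 0 < x -> psi (x + 1) = psi x + / x.
Proof.
  intros Hx. unfold psi. rewrite G1_succ, Gamma_succ by auto.
  pose proof (Gamma_pos x Hx). field. split; lra.
Qed.

Lemma psi_upper y : 0 < y -> psi y <= ln y.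
Proof.
  intros Hy. unfold psi. pose proof (Gamma_pos y Hy). pose proof (G1_upper y Hy).
  apply Rmult_le_reg_r with (Gamma y); auto. unfold Rdiv. rewrite Rmult_assoc, Rinv_l by lra. lra.
Qed.

Lemma psi_lower x : 0 < x -> ln x - / x <= psi x.
Proof.
  intros Hx. unfold psi. pose proof (Gamma_pos x Hx). pose proof (G1_lower x Hx).
  apply Rmult_le_reg_r with (Gamma x); auto. unfold Rdiv. rewrite Rmult_assoc, Rinv_l by lra.
  replace ((ln x - / x) * Gamma x) with (Gamma x * ln x - Gamma x / x) by (field; lra). lra.
Qed.

Lemma psi_mono x y : 0 < x -> x < y -> psi x <= psi y.
Proof.
  intros Hx Hxy.
  assert (Hy : 0 < y) by lra.
  pose proof (Gamma_pos x Hx) as Gx. pose proof (Gamma_pos y Hy) as Gy.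
  set (c := (ln (Gamma y) - ln (Gamma x)) / (y - x)).
  assert (H : IG (fun t => (/ Gamma y * (W y t * ln t) - / Gamma x * (W x t * ln t))
                          - (c * (/ Gamma y * W y t) - c * (/ Gamma x * W x t)))
                 ((/ Gamma y * G1 y - / Gamma x * G1 x)
                          - (c * (/ Gamma y * Gamma y) - c * (/ Gamma x * Gamma x)))).
  { apply IG_minus; apply IG_minus.
    apply IG_scal; apply IG_Wln; lra. apply IG_scal; apply IG_Wln; lra.
    apply IG_scal; apply IG_scal; apply IG_W; lra.
    apply IG_scal; apply IG_scal; apply IG_W; lra. }
  apply IG_ge0 in H.
  - unfold psi. rewrite !Rinv_l in H by lra. unfold Rdiv. lra.
  - intros t Ht.
    replace ((/ Gamma y * (W y t * ln t) - / Gamma x * (W x t * ln t))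
             - (c * (/ Gamma y * W y t) - c * (/ Gamma x * W x t)))
      with ((ln t - c) * (/ Gamma y * W y t - / Gamma x * W x t)) by ring.
    replace y with (x + (y - x)) at 2 by ring. rewrite W_shift.
    pose proof (W_pos x t) as Wp.
    assert (Hc : exp ((y - x) * c) = Gamma y / Gamma x).
    { unfold c. replace ((y - x) * ((ln (Gamma y) - ln (Gamma x)) / (y - x)))
        with (ln (Gamma y) - ln (Gamma x)) by (field; lra).
      unfold Rminus; rewrite exp_plus, exp_Ropp, !exp_ln by lra. reflexivity. }
    replace (/ Gamma y * (exp ((y - x) * ln t) * W x t) - / Gamma x * W x t)
      with (W x t / Gamma y * (exp ((y - x) * ln t) - exp ((y - x) * c))).
    2:{ rewrite Hc. field. lra. }
    assert (0 < W x t / Gamma y) by (apply Rdiv_lt_0_compat; lra).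
    destruct (Rle_dec c (ln t)).
    + assert (exp ((y - x) * c) <= exp ((y - x) * ln t)) by (apply exp_le_inc; nra).
      apply Rmult_le_pos; [lra|]. apply Rmult_le_pos; lra.
    + assert (exp ((y - x) * ln t) <= exp ((y - x) * c)) by (apply exp_le_inc; nra).
      replace ((ln t - c) * (W x t / Gamma y * (exp ((y - x) * ln t) - exp ((y - x) * c))))
        with ((c - ln t) * (W x t / Gamma y * (exp ((y - x) * c) - exp ((y - x) * ln t)))) by ring.
      apply Rmult_le_pos; [lra|]. apply Rmult_le_pos; lra.
Qed.

Lemma psi_up2 x : 0 < x -> x <= / 2 -> psi x <= ln x - / (2 * x).
Proof.
  intros Hx Hx2.
  pose proof (psi_upper (x + 4) ltac:(lra)) as U.
  replace (x + 4) with ((((x + 1) + 1) + 1) + 1) in U by ring.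
  rewrite !psi_succ in U by lra.
  replace ((((x + 1) + 1) + 1) + 1) with (x + 4) in U by ring.
  assert (K : ln (x + 4) - ln (8 * x) <= (x + 4) / (8 * x) - 1).
  { rewrite <- ln_div by lra. apply ln_le_sub1. apply Rdiv_lt_0_compat; lra. }
  rewrite ln_mult in K by lra.
  assert (E8 : ln 8 = 3 * ln 2).
  { replace 8 with (2 * (2 * 2)) by ring. rewrite !ln_mult by lra. ring. }
  pose proof ln2_lt.
  assert (I1 : 2 / 3 <= / (x + 1)).
  { replace (2/3) with (/ (3/2)) by field. apply Rinv_le_contravar; lra. }
  assert (I2 : 2 / 5 <= / (x + 1 + 1)).
  { replace (2/5) with (/ (5/2)) by field. apply Rinv_le_contravar; lra. }
  assert (I3 : 2 / 7 <= / (x + 1 + 1 + 1)).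
  { replace (2/7) with (/ (7/2)) by field. apply Rinv_le_contravar; lra. }
  replace ((x + 4) / (8 * x)) with (/ 8 + / (2 * x)) in K by (field; lra).
  assert (/ (2 * x) = / 2 * / x) by (field; lra).
  lra.
Qed.

Lemma sqrt_gt_nu nu lam : nu < 0 -> nu ^ 2 < lam -> - nu < sqrt lam.
Proof.
  intros Hn Hl. rewrite <- (sqrt_pow2 (- nu)) by lra.
  apply sqrt_lt_1_alt. split. apply pow2_ge_0. replace ((- nu)^2) with (nu^2) by ring. auto.
Qed.

Lemma theta_eq nu lam : nu < 0 -> nu ^ 2 < lam ->
  theta lam nu = / (2 * PI) * (psi ((sqrt lam + nu) / (2 * sqrt lam)) + 2 * euler_gamma
                 + ln (2 * sqrt lam)).
Proof.
  intros Hn Hl. pose proof (sqrt_gt_nu nu lam Hn Hl).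
  unfold theta. rewrite digamma_eq.
  - replace (/ 2 + nu / (2 * sqrt lam)) with ((sqrt lam + nu) / (2 * sqrt lam)) by (field; lra).
    reflexivity.
  - replace (/ 2 + nu / (2 * sqrt lam)) with ((sqrt lam + nu) / (2 * sqrt lam)) by (field; lra).
    apply Rdiv_lt_0_compat; lra.
Qed.

Lemma theta_bounds nu lam : nu < 0 -> nu ^ 2 < lam ->
     / (2 * PI) * (ln (sqrt lam + nu) - 2 * sqrt lam / (sqrt lam + nu) + 2 * euler_gamma)
       <= theta lam nu /\
     theta lam nu <=
     / (2 * PI) * (ln (sqrt lam + nu) - sqrt lam / (sqrt lam + nu) + 2 * euler_gamma).
Proof.
  intros Hn Hl. pose proof (sqrt_gt_nu nu lam Hn Hl) as Hs.
  rewrite theta_eq by auto.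
  set (s := sqrt lam) in *. set (x := (s + nu) / (2 * s)).
  assert (Hx : 0 < x) by (apply Rdiv_lt_0_compat; lra).
  assert (Hx2 : x <= / 2) by (unfold x; apply Rmult_le_reg_l with (2 * s); [lra|]; field_simplify; lra).
  assert (Hlx : ln x = ln (s + nu) - ln (2 * s)) by (unfold x; apply ln_div; lra).
  assert (Hix : / x = 2 * s / (s + nu)) by (unfold x; field; lra).
  assert (Hix2 : / (2 * x) = s / (s + nu)) by (unfold x; field; lra).
  pose proof (psi_lower x Hx). pose proof (psi_up2 x Hx Hx2).
  assert (Hp : 0 < / (2 * PI)) by (apply Rinv_0_lt_compat; pose proof PI_RGT_0; lra).
  split; apply Rmult_le_compat_l; lra.
Qed.

Lemma theta_mono nu l1 l2 : nu < 0 -> nu ^ 2 < l1 -> l1 < l2 -> theta l1 nu < theta l2 nu.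
Proof.
  intros Hn H1 H12.
  assert (H2 : nu ^ 2 < l2) by lra.
  pose proof (sqrt_gt_nu nu l1 Hn H1) as S1. pose proof (sqrt_gt_nu nu l2 Hn H2) as S2.
  rewrite !theta_eq by auto.
  assert (S12 : sqrt l1 < sqrt l2) by (apply sqrt_lt_1_alt; split; [pose proof (pow2_ge_0 nu); lra | auto]).
  set (s1 := sqrt l1) in *. set (s2 := sqrt l2) in *.
  assert (Hx1 : 0 < (s1 + nu) / (2 * s1)) by (apply Rdiv_lt_0_compat; lra).
  assert (Hxx : (s1 + nu) / (2 * s1) < (s2 + nu) / (2 * s2)).
  { replace ((s1 + nu) / (2 * s1)) with (/ 2 + nu / 2 * / s1) by (field; lra).
    replace ((s2 + nu) / (2 * s2)) with (/ 2 + nu / 2 * / s2) by (field; lra).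
    assert (/ s2 < / s1) by (apply Rinv_lt_contravar; nra).
    nra. }
  pose proof (psi_mono _ _ Hx1 Hxx).
  assert (ln (2 * s1) < ln (2 * s2)) by (apply ln_increasing; lra).
  assert (Hp : 0 < / (2 * PI)) by (apply Rinv_0_lt_compat; pose proof PI_RGT_0; lra).
  apply Rmult_lt_compat_l; lra.
Qed.

Lemma theta_lim_right nu : nu < 0 ->
  filterlim (fun lam => theta lam nu) (at_right (nu ^ 2)) (Rbar_locally m_infty).
Proof.
  intros Hn P [M HM].
  set (A := Rabs (2 * euler_gamma - 2 * PI * M) + 1).
  assert (HA : 0 < A) by (unfold A; pose proof (Rabs_pos (2 * euler_gamma - 2 * PI * M)); lra).
  set (m := Rmin 1 (- nu / A)).
  assert (Hm : 0 < m) by (apply Rmin_pos; [lra | apply Rdiv_lt_0_compat; lra]).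
  assert (Hd : 0 < - nu * m) by nra.
  exists (mkposreal _ Hd). intros y Hy Hy0. apply HM.
  assert (Hy1 : Rabs (y - nu ^ 2) < - nu * m) by (apply ball_R; exact Hy).
  rewrite Rabs_pos_eq in Hy1 by lra.
  destruct (theta_bounds nu y Hn Hy0) as [_ Hub].
  pose proof (sqrt_gt_nu nu y Hn Hy0) as Hs.
  set (s := sqrt y) in *.
  assert (Hss : s * s = y) by (unfold s; apply sqrt_sqrt; pose proof (pow2_ge_0 nu); lra).
  set (r := s + nu) in *.
  assert (Hr : 0 < r) by (unfold r; lra).
  assert (Hrr : r * (s - nu) = y - nu ^ 2) by (unfold r; nra).
  assert (Hrm : r < m).
  { apply Rmult_lt_reg_r with (- nu). lra.
    assert (r * (- nu) <= r * (s - nu)) by (apply Rmult_le_compat_l; lra). nra. }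
  assert (Hr1 : r < 1) by (pose proof (Rmin_l 1 (- nu / A)); unfold m in Hrm; lra).
  assert (HrA : r < - nu / A) by (pose proof (Rmin_r 1 (- nu / A)); unfold m in Hrm; lra).
  assert (Hlr : ln r <= r - 1) by (apply ln_le_sub1; auto).
  assert (Hsr : - nu / r <= s / r) by (unfold Rdiv; apply Rmult_le_compat_r; [left; apply Rinv_0_lt_compat; auto | lra]).
  assert (HAr : A < - nu / r).
  { apply Rmult_lt_reg_r with r; auto. replace (- nu / r * r) with (- nu) by (field; lra).
    apply Rmult_lt_reg_r with (/ A). apply Rinv_0_lt_compat; auto.
    replace (A * r * / A) with r by (field; lra). exact HrA. }
  assert (Hab : 2 * euler_gamma - 2 * PI * M <= Rabs (2 * euler_gamma - 2 * PI * M)) by apply Rle_abs.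
  assert (Hin : ln r - s / r + 2 * euler_gamma < 2 * PI * M) by (unfold A in HAr; lra).
  assert (Hp : 0 < 2 * PI) by (pose proof PI_RGT_0; lra).
  eapply Rle_lt_trans; [exact Hub|].
  apply Rmult_lt_reg_l with (2 * PI); auto.
  rewrite <- Rmult_assoc, Rinv_r, Rmult_1_l by lra. exact Hin.
Qed.

Lemma theta_lim_inf nu : nu < 0 ->
  filterlim (fun lam => theta lam nu) (Rbar_locally p_infty) (Rbar_locally p_infty).
Proof.
  intros Hn P [M HM].
  set (B := 2 * PI * M + 4 - 2 * euler_gamma).
  set (c := 2 * exp B).
  assert (Hc : 0 < c) by (unfold c; pose proof (exp_pos B); lra).
  exists (Rmax (4 * nu ^ 2) (c ^ 2)). intros y Hy. apply HM.
  assert (Hy1 : 4 * nu ^ 2 < y) by (pose proof (Rmax_l (4 * nu ^ 2) (c ^ 2)); lra).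
  assert (Hy2 : c ^ 2 < y) by (pose proof (Rmax_r (4 * nu ^ 2) (c ^ 2)); lra).
  assert (Hy0 : nu ^ 2 < y) by nra.
  destruct (theta_bounds nu y Hn Hy0) as [Hlb _].
  pose proof (sqrt_gt_nu nu y Hn Hy0) as Hs.
  assert (Hsc : c < sqrt y) by (rewrite <- (sqrt_pow2 c) by lra; apply sqrt_lt_1_alt; split; [apply pow2_ge_0|auto]).
  assert (Hs2 : - 2 * nu < sqrt y).
  { rewrite <- (sqrt_pow2 (- 2 * nu)) by lra. apply sqrt_lt_1_alt; split; [apply pow2_ge_0|]. nra. }
  set (s := sqrt y) in *.
  set (r := s + nu) in *.
  assert (Hr : s / 2 <= r) by (unfold r; lra).
  assert (Hr0 : 0 < r) by lra.
  assert (Hq : 2 * s / r <= 4).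
  { apply Rmult_le_reg_r with r; auto. replace (2 * s / r * r) with (2 * s) by (field; lra). lra. }
  assert (Hl : B < ln r).
  { apply Rlt_le_trans with (ln (s / 2)).
    - rewrite <- (ln_exp B). apply ln_increasing. apply exp_pos. unfold c in Hsc. lra.
    - apply ln_le; lra. }
  assert (Hin : 2 * PI * M < ln r - 2 * s / r + 2 * euler_gamma) by (unfold B in Hl; lra).
  assert (Hp : 0 < 2 * PI) by (pose proof PI_RGT_0; lra).
  eapply Rlt_le_trans; [|exact Hlb].
  apply Rmult_lt_reg_l with (2 * PI); auto.
  rewrite <- Rmult_assoc, Rinv_r, Rmult_1_l by lra. exact Hin.
Qed.

Theorem mainTheorem7 (nu : R) (hnu : nu < 0) :
  (forall l1 l2 : R, nu ^ 2 < l1 -> l1 < l2 -> theta l1 nu < theta l2 nu) /\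
  filterlim (fun lam => theta lam nu) (at_right (nu ^ 2)) (Rbar_locally m_infty) /\
  filterlim (fun lam => theta lam nu) (Rbar_locally p_infty) (Rbar_locally p_infty) /\
  (forall lam : R, nu ^ 2 < lam ->
     / (2 * PI) * (ln (sqrt lam + nu) - 2 * sqrt lam / (sqrt lam + nu) + 2 * euler_gamma)
       <= theta lam nu /\
     theta lam nu <=
     / (2 * PI) * (ln (sqrt lam + nu) - sqrt lam / (sqrt lam + nu) + 2 * euler_gamma)).
Proof.
  split; [|split; [|split]].
  - intros; apply theta_mono; auto.
  - apply theta_lim_right; auto.
  - apply theta_lim_inf; auto.
  - intros; apply theta_bounds; auto.
Qed.
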